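(* Let $\Gamma$ be a group acting by measure class preserving transformations on a standard probability space $(B,\nu)$ such that the action is strongly almost transitive: for every measurable $A\subset B$ with $\nu(A)>0$ there exist $\gamma_n\in\Gamma$ with $\nu(\gamma_n^{-1}A)\to1$. Let $C$ be a standard Borel space with a measurable $\Gamma$-action, and let $\pi_1,\pi_2:B\to C$ be measurable maps with $\pi_i(\gamma x)=\gamma\pi_i(x)$ for all $\gamma\in\Gamma$ and $\nu$-a.e. $x$. Then either $\pi_1(x)=\pi_2(x)$ for $\nu$-a.e. $x\in B$, or the measures $(\pi_1)_*\nu$ and $(\pi_2)_*\nu$ are mutually singular. *)

(* Defs.v *)
From HB Require Import structures.
From mathcomp Require Import all_boot all_order all_algebra.
From mathcomp Require Import all_classical all_reals all_analysis.
Set Implicit Arguments. Unset Strict Implicit. Unset Printing Implicit Defensive.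
Import Order.TTheory GRing.Theory Num.Theory.
Local Open Scope classical_set_scope.
Local Open Scope ring_scope.

Definition is_group (G : Type) (mul : G -> G -> G) (one : G) (inv : G -> G) :=
  [/\ forall x y z, mul x (mul y z) = mul (mul x y) z,
      forall x, mul one x = x, forall x, mul x one = x,
      forall x, mul (inv x) x = one & forall x, mul x (inv x) = one].

Definition is_action (G T : Type) (mul : G -> G -> G) (one : G)
  (act : G -> T -> T) :=
  (forall x, act one x = x) /\ (forall g h x, act (mul g h) x = act g (act h x)).

Definition measurable_action (G : Type) d (T : measurableType d)
  (act : G -> T -> T) := forall g, measurable_fun [set: T] (act g).

Definition measure_class_preserving (G : Type) d (T : measurableType d)
  (R : realType) (nu : set T -> \bar R) (act : G -> T -> T) :=
  forall g (A : set T), measurable A ->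
    (nu A = 0%E <-> nu (act g @^-1` A) = 0%E).

(* Strong almost transitivity: for every measurable A of positive measure there
   are gamma_n with nu (gamma_n^{-1} A) -> 1 ; gamma_n^{-1} A is the preimage
   of A under the action of gamma_n. *)
Definition strongly_almost_transitive (G : Type) d (T : measurableType d)
  (R : realType) (nu : set T -> \bar R) (act : G -> T -> T) :=
  forall A : set T, measurable A -> (0 < nu A)%E ->
    exists u : nat -> G,
      (fun n => nu (act (u n) @^-1` A)) @ \oo --> 1%E.

(* Standard Borel space: Borel isomorphic to a Borel subset of the real line
   (Kuratowski); measurable sets of R are the Borel sets. *)
Definition standard_borel (R : realType) d (T : measurableType d) :=
  exists f : T -> R,
    [/\ measurable_fun [set: T] f, injective f, measurable (range f)
      & forall A : set T, measurable A -> measurable (f @` A)].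

Definition mutually_singular d (T : measurableType d) (R : realType)
  (mu1 mu2 : set T -> \bar R) :=
  exists S : set T, [/\ measurable S, mu1 S = 0%E & mu2 (~` S) = 0%E].

(* Main.v *)
Require Import Defs.
From HB Require Import structures.
From mathcomp Require Import all_boot all_order all_algebra.
From mathcomp Require Import all_classical all_reals all_analysis.
From mathcomp Require Import lra.
Import Order.TTheory GRing.Theory Num.Theory.
Local Open Scope classical_set_scope.
Local Open Scope ring_scope.
Lemma zero_of_small (R : realType) (x : \bar R) : (0 <= x)%E ->
  (forall k : nat, (x <= (k.+1%:R^-1)%:E)%E) -> x = 0%E.
Proof.
move=> x0 Hk; apply/eqP; rewrite eq_le x0 andbT.
apply/lee_addgt0Pr => /= _ /posnumP[e]; near \oo => k.
apply: (le_trans (Hk k)); rewrite add0e lee_fin; apply: ltW.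
by near: k; exact: near_infty_natSinv_lt.
Unshelve. all: by end_near. Qed.

Section Sing.
Context (R : realType) (dB : measure_display) (B : measurableType dB)
  (nu : probability B R) (dC : measure_display) (C : measurableType dC)
  (p1 p2 : B -> C) (mp1 : measurable_fun [set: B] p1)
  (mp2 : measurable_fun [set: B] p2).

Lemma mpre (p : B -> C) : measurable_fun [set: B] p ->
  forall X, measurable X -> measurable (p @^-1` X).
Proof. by move=> mp X mX; rewrite -[_ @^-1` _]setTI; exact: mp. Qed.

Hypothesis H : forall e : R, 0 < e -> exists T : set C,
  [/\ measurable T, (nu (p1 @^-1` ~` T) <= e%:E)%E & (nu (p2 @^-1` T) <= e%:E)%E].

Lemma step1 (e : R) : 0 < e -> exists W : set C,
  [/\ measurable W, nu (p2 @^-1` W) = 0%E & (nu (p1 @^-1` ~` W) <= e%:E)%E].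
Proof.
move=> e0.
pose eps (k : nat) := Num.min (e / (2 ^ k.+1)%:R) (k.+1%:R^-1).
have eps0 k : 0 < eps k by rewrite lt_min divr_gt0 ?invr_gt0 ?ltr0n ?expn_gt0.
have : forall k, exists T : set C, [/\ measurable T, (nu (p1 @^-1` ~` T) <= (eps k)%:E)%E
   & (nu (p2 @^-1` T) <= (eps k)%:E)%E] by move=> k; exact: H.
move=> /choice[T HT].
exists (\bigcap_k T k); split.
- by apply: bigcapT_measurable => k; have [] := HT k.
- apply: zero_of_small; first exact: measure_ge0.
  move=> k; have [mT _ h2] := HT k.
  apply: (@le_trans _ _ (nu (p2 @^-1` T k))).
    apply: le_measure.
    + by rewrite inE; apply: mpre => //; apply: bigcapT_measurable => j; have [] := HT j.
    + by rewrite inE; exact: mpre.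
    + by move=> x /= Hx; exact: Hx.
  by apply: (le_trans h2); rewrite lee_fin ge_min lexx orbT.
- apply: (le_trans (@measure_sigma_subadditive _ _ _ nu _ (fun k => p1 @^-1` ~` T k) _ _ _)).
  + by move=> k; apply: mpre => //; apply: measurableC; have [] := HT k.
  + by apply: mpre => //; apply: measurableC; apply: bigcapT_measurable => j; have [] := HT j.
  + move=> x /= Hx; apply: contrapT => Hn; apply: Hx => k _.
    by apply: contrapT => Hk; apply: Hn; exists k.
  apply: le_trans (epsilon_trick0 xpredT (ltW e0)).
  apply: lee_nneseries => [i _ _|n _]; first exact: measure_ge0.
  by have [_ h1 _] := HT n; apply: (le_trans h1); rewrite lee_fin ge_min lexx.
Qed.

Lemma sing : exists S : set C,
  [/\ measurable S, nu (p1 @^-1` S) = 0%E & nu (p2 @^-1` ~` S) = 0%E].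
Proof.
have : forall n : nat, exists W : set C,
  [/\ measurable W, nu (p2 @^-1` W) = 0%E & (nu (p1 @^-1` ~` W) <= (n.+1%:R^-1)%:E)%E].
  by move=> n; apply: step1; rewrite invr_gt0 ltr0n.
move=> /choice[W HW].
have mW n : measurable (W n) by have [] := HW n.
exists (~` \bigcup_n W n); split.
- by apply: measurableC; exact: bigcupT_measurable.
- apply: zero_of_small; first exact: measure_ge0.
  move=> k; have [_ _ h] := HW k; apply: le_trans h.
  apply: le_measure.
  + by rewrite inE; apply: mpre => //; apply: measurableC; exact: bigcupT_measurable.
  + by rewrite inE; apply: mpre => //; apply: measurableC.
  + by move=> x /= Hx Hk; apply: Hx; exists k.
- rewrite setCK; apply/eqP; rewrite eq_le measure_ge0 andbT.
  apply: (le_trans (@measure_sigma_subadditive _ _ _ nu _ (fun k => p2 @^-1` W k) _ _ _)).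
  + by move=> k; apply: mpre.
  + by apply: mpre => //; exact: bigcupT_measurable.
  + by move=> x [k _ Hk]; exists k.
  by rewrite eseries0 // => i _ _; have [] := HW i.
Qed.
End Sing.

Section Sat.
Context (R : realType) (G : Type) (dB : measure_display) (B : measurableType dB)
  (nu : probability B R) (dC : measure_display) (C : measurableType dC)
  (actB : G -> B -> B) (actC : G -> C -> C)
  (p1 p2 : B -> C) (mp1 : measurable_fun [set: B] p1)
  (mp2 : measurable_fun [set: B] p2)
  (mB : measurable_action actB) (mC : measurable_action actC)
  (sat : strongly_almost_transitive nu actB)
  (e1 : forall g, {ae nu, forall x, p1 (actB g x) = actC g (p1 x)})
  (e2 : forall g, {ae nu, forall x, p2 (actB g x) = actC g (p2 x)}).

Lemma small (U V : set C) : measurable U -> measurable V -> U `&` V = set0 ->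
  (0 < nu (p1 @^-1` U `&` p2 @^-1` V))%E ->
  forall e : R, 0 < e -> exists T : set C,
  [/\ measurable T, (nu (p1 @^-1` ~` T) <= e%:E)%E & (nu (p2 @^-1` T) <= e%:E)%E].
Proof.
move=> mU mV UV Apos e e0.
set A := p1 @^-1` U `&` p2 @^-1` V.
have mA : measurable A by apply: measurableI; exact: mpre.
have [u hu] := sat A mA Apos.
move/fine_cvgP: hu => [hfin /cvgrPdist_lt hd].
have hd' := hd e e0.
have : \forall n \near \oo, (nu (actB (u n) @^-1` A) \is a fin_num) /\
   `|1 - fine (nu (actB (u n) @^-1` A))| < e.
  by near=> n; split; near: n.
case => N _ HN.
have [fin dist] := HN N (leqnn N).
set g := u N in fin dist.
set Ag := actB g @^-1` A in fin dist.
have mAg : measurable Ag by rewrite /Ag -[_ @^-1` _]setTI; exact: mB.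
have cAg : (nu (~` Ag) <= e%:E)%E.
  rewrite probability_setC // -(fineK fin) -EFinB lee_fin.
  have := ler_norm (1 - fine (nu Ag)); move: dist; set r := fine _ => ??. lra.
have mT : measurable (actC g @^-1` U) by rewrite -[_ @^-1` _]setTI; exact: mC.
exists (actC g @^-1` U); split => //.
- have [N1 [mN1 N10 HN1]] := e1 g.
  apply: (@le_trans _ _ (nu (~` Ag `|` N1))).
    apply: le_measure.
    + by rewrite inE; apply: mpre => //; exact: measurableC.
    + by rewrite inE; apply: measurableU => //; exact: measurableC.
    move=> x /= nU; case: (pselect (N1 x)) => [|nN]; first by right.
    left => -[hU _]; apply: nU.
    have <- : p1 (actB g x) = actC g (p1 x).
      by apply: contrapT => hne; apply: nN; apply: HN1.
    exact: hU.
  apply: (le_trans (measureU2 _ (measurableC mAg) _)) => //.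
  rewrite [X in (_ + X)%E](_ : _ = 0%E); last exact: N10.
  by rewrite adde0.
- have [N2 [mN2 N20 HN2]] := e2 g.
  apply: (@le_trans _ _ (nu (~` Ag `|` N2))).
    apply: le_measure.
    + by rewrite inE; exact: mpre.
    + by rewrite inE; apply: measurableU => //; exact: measurableC.
    move=> x /= hU; case: (pselect (N2 x)) => [|nN]; first by right.
    left => -[_ hV].
    have e2x : p2 (actB g x) = actC g (p2 x).
      by apply: contrapT => hne; apply: nN; apply: HN2.
    rewrite /= e2x in hV.
    have : (U `&` V) (actC g (p2 x)) by split.
    by rewrite UV.
  apply: (le_trans (measureU2 _ (measurableC mAg) _)) => //.
  by rewrite [X in (_ + X)%E](_ : _ = 0%E) ?adde0; last exact: N20.
Unshelve. all: by end_near. Qed.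
End Sat.

Lemma mlt (R : realType) dC (C : measurableType dC) (f : C -> R) :
  measurable_fun [set: C] f -> forall r, measurable [set c | f c < r].
Proof.
move=> mf r; have -> : [set c | f c < r] = f @^-1` `]-oo, r[.
  by apply/seteqP; split => c /=; rewrite in_itv.
rewrite -[X in measurable X]setTI; apply: mf => //; exact: measurable_itv.
Qed.

Lemma mgt (R : realType) dC (C : measurableType dC) (f : C -> R) :
  measurable_fun [set: C] f -> forall r, measurable [set c | r < f c].
Proof.
move=> mf r; have -> : [set c | r < f c] = f @^-1` `]r, +oo[.
  by apply/seteqP; split => c /=; rewrite in_itv /= andbT.
rewrite -[X in measurable X]setTI; apply: mf => //; exact: measurable_itv.
Qed.

Theorem lemma7p2 (R : realType)
  (G : Type) (mul : G -> G -> G) (one : G) (inv : G -> G)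
  (dB : measure_display) (B : measurableType dB) (nu : probability B R)
  (dC : measure_display) (C : measurableType dC)
  (actB : G -> B -> B) (actC : G -> C -> C)
  (pi1 pi2 : B -> C) :
  is_group mul one inv ->
  standard_borel R B ->
  is_action mul one actB -> measurable_action actB ->
  measure_class_preserving nu actB ->
  strongly_almost_transitive nu actB ->
  standard_borel R C ->
  is_action mul one actC -> measurable_action actC ->
  measurable_fun [set: B] pi1 -> measurable_fun [set: B] pi2 ->
  (forall g, {ae nu, forall x, pi1 (actB g x) = actC g (pi1 x)}) ->
  (forall g, {ae nu, forall x, pi2 (actB g x) = actC g (pi2 x)}) ->
  {ae nu, forall x, pi1 x = pi2 x} \/
  mutually_singular (pushforward nu pi1) (pushforward nu pi2).
Proof.
move=> _ _ _ mB _ sat [f [mf finj _ _]] _ mC mp1 mp2 e1 e2.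
pose A1 (r : R) := pi1 @^-1` [set c | f c < r] `&` pi2 @^-1` [set c | r < f c].
pose A2 (r : R) := pi1 @^-1` [set c | r < f c] `&` pi2 @^-1` [set c | f c < r].
have mA1 r : measurable (A1 r) by apply: measurableI; apply: mpre => //;
  [exact: mlt | exact: mgt].
have mA2 r : measurable (A2 r) by apply: measurableI; apply: mpre => //;
  [exact: mgt | exact: mlt].
have fin : (exists S : set C, [/\ measurable S, nu (pi1 @^-1` S) = 0%E & nu (pi2 @^-1` ~` S) = 0%E]) ->
   mutually_singular (pushforward nu pi1) (pushforward nu pi2).
  by move=> [S [mS h1 h2]]; exists S; split.
case: (pselect (exists q : rat, (0 < nu (A1 (ratr q)))%E \/ (0 < nu (A2 (ratr q)))%E)).
  move=> [q [h|h]]; right; apply: fin; apply: (@sing R dB B nu dC C pi1 pi2 mp1 mp2).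
    apply: (@small R G dB B nu dC C actB actC pi1 pi2 mp1 mp2 mB mC sat e1 e2 _ _ (@mlt _ _ _ _ mf (ratr q)) (@mgt _ _ _ _ mf (ratr q))) => //.
    apply/seteqP; split => // c [/= h1 h2].
    by have := lt_trans h1 h2; rewrite ltxx.
  - apply: (@small R G dB B nu dC C actB actC pi1 pi2 mp1 mp2 mB mC sat e1 e2 _ _ (@mgt _ _ _ _ mf (ratr q)) (@mlt _ _ _ _ mf (ratr q))) => //.
    apply/seteqP; split => // c [/= h1 h2].
    by have := lt_trans h1 h2; rewrite ltxx.
move=> hno; left.
have z0 (X : set B) : measurable X -> ~ (0 < nu X)%E -> nu X = 0%E.
  move=> mX hX; apply/eqP; rewrite eq_le measure_ge0 andbT leNgt; apply/negP => h.
  exact: hX.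
pose r (n : nat) : R := ratr (odflt 0 (unpickle n) : rat).
exists (\bigcup_n (A1 (r n) `|` A2 (r n))); split.
- by apply: bigcupT_measurable => n; apply: measurableU.
- apply/eqP; rewrite eq_le measure_ge0 andbT.
  apply: (le_trans (@measure_sigma_subadditive _ _ _ nu _ (fun n => A1 (r n) `|` A2 (r n)) _ _ _)).
  + by move=> n; apply: measurableU.
  + by apply: bigcupT_measurable => n; apply: measurableU.
  + by [].
  rewrite eseries0 // => n _ _.
  apply/eqP; rewrite eq_le measure_ge0 andbT.
  apply: (le_trans (measureU2 _ (mA1 _) (mA2 _))).
  rewrite [X in (X + _)%E](_ : _ = 0%E); last first.
    by apply: z0 => // h; apply: hno; exists (odflt 0 (unpickle n)); left.
  rewrite [X in (_ + X)%E](_ : _ = 0%E) ?adde0 //.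
  by apply: z0 => // h; apply: hno; exists (odflt 0 (unpickle n)); right.
- move=> x /= hne.
  have fne : f (pi1 x) != f (pi2 x) by apply/eqP => /finj.
  case: (ltgtP (f (pi1 x)) (f (pi2 x))) fne => // hlt _.
  + have [q] := rat_in_itvoo hlt; rewrite in_itv /= => /andP[h1 h2].
    exists (pickle q) => //; left; rewrite /r pickleK /=; split; [exact: h1 | exact: h2].
  + have [q] := rat_in_itvoo hlt; rewrite in_itv /= => /andP[h1 h2].
    exists (pickle q) => //; right; rewrite /r pickleK /=; split; [exact: h2 | exact: h1].
Qed.
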